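(* Let $\mathcal{Z}=\{z_1,\dots,z_n\}\subset\mathbb{R}^2$ be a finite set of points, let $d_{ij}$ denote the Euclidean distance between $z_i$ and $z_j$, and fix a cutoff distance $d_c>0$. Define the density of each point by $\rho_i=\sum_{j\neq i}\exp\!\left(-(d_{ij}/d_c)^2\right)$, and define $\delta_i=\min_{j:\rho_j>\rho_i} d_{ij}$ when some $j$ satisfies $\rho_j>\rho_i$, and $\delta_i=\max_{k,l} d_{kl}$ otherwise. Let $\bar{\rho}=\frac{1}{n}\sum_{j=1}^n\rho_j$. Call $z_i$ a local cluster center if $\delta_i>d_c$ and $\rho_i>\bar{\rho}$. If $z_i$ and $z_j$ are two local cluster centers with $\rho_i\neq\rho_j$, then $d_{ij}\ge d_c$. *)

(* Defs.v *)
From HB Require Import structures.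
From mathcomp Require Import all_boot all_order all_algebra.
From mathcomp Require Import all_classical all_reals.
From mathcomp Require Import sequences exp.
Set Implicit Arguments. Unset Strict Implicit. Unset Printing Implicit Defensive.
Import Order.TTheory GRing.Theory Num.Theory.
Local Open Scope ring_scope.

Section DPC.
Variables (R : realType) (n : nat) (z : 'I_n -> R * R) (dc : R).

Definition dist (i j : 'I_n) : R :=
  Num.sqrt (((z i).1 - (z j).1) ^+ 2 + ((z i).2 - (z j).2) ^+ 2).

Definition rho (i : 'I_n) : R :=
  \sum_(j | j != i) expR (- (dist i j / dc) ^+ 2).

(* max_{k,l} d_kl (distances are >= 0, so 0 is a neutral start) *)
Definition maxdist : R := \big[Num.max/0]_(k : 'I_n) \big[Num.max/0]_(l : 'I_n) dist k l.

Definition delta (i : 'I_n) : R :=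
  match [pick j | rho i < rho j] with
  | Some j0 => \big[Num.min/dist i j0]_(j | rho i < rho j) dist i j
  | None => maxdist
  end.

Definition rho_bar : R := (n%:R)^-1 * \sum_(j : 'I_n) rho j.

Definition local_cluster_center (i : 'I_n) : Prop :=
  dc < delta i /\ rho_bar < rho i.

End DPC.

(* Main.v *)
Require Import Defs.
From HB Require Import structures.
From mathcomp Require Import all_boot all_order all_algebra.
From mathcomp Require Import all_classical all_reals.
From mathcomp Require Import sequences exp.
Import Order.TTheory GRing.Theory Num.Theory.
Local Open Scope ring_scope.

Lemma dist_sym (R : realType) (n : nat) (z : 'I_n -> R * R) (i j : 'I_n) :
  dist z i j = dist z j i.
Proof.
rewrite /dist -(opprB (z j).1) -(opprB (z j).2) !sqrrN //.
Qed.

Lemma key (R : realType) (n : nat) (z : 'I_n -> R * R) (dc : R) (i j : 'I_n)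
  (hi : dc < delta z dc i) (hlt : rho z dc i < rho z dc j) : dc <= dist z i j.
Proof.
move: hi; rewrite /delta.
case: pickP => [j0 _|H]; last by move: (H j); rewrite hlt.
move=> h; apply/ltW/(lt_le_trans h).
exact: (Order.TotalTheory.bigmin_le_cond _ _ hlt).
Qed.

Theorem theorem2 (R : realType) (n : nat) (z : 'I_n -> R * R) (dc : R)
  (hdc : 0 < dc) (i j : 'I_n)
  (hi : local_cluster_center z dc i) (hj : local_cluster_center z dc j)
  (hneq : rho z dc i != rho z dc j) :
  dc <= dist z i j.
Proof.
case: hi hj => [hi _] [hj _].
case: (ltgtP (rho z dc i) (rho z dc j)) hneq => // h _.
- exact: key hi h.
- rewrite dist_sym; exact: key hj h.
Qed.
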